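(* In the single-access setting below (i.e. $n=1$), for every $k\ge\max(m,1)$: $\mathrm{Valid}(k)\Rightarrow\mathrm{Valid}(k+1)$. Setting: fix $r\ge0$, a set $V$ of values, one index transformer $e:\mathbb{Z}^r\to\mathbb{Z}$, $m\ge0$ condition predicates $g_1,\dots,g_m:\mathbb{Z}^r\to\{\mathsf{true},\mathsf{false}\}$, a function $F:V\times\{\mathsf{true},\mathsf{false}\}^m\to\{\mathsf{true},\mathsf{false}\}$, and a formula $P\in\Phi_{\wedge,\vee}$ whose atoms are fold-atoms $a_\gamma$, $\gamma:\mathbb{Z}^r\to\{\mathsf{true},\mathsf{false}\}$. Define $\mathrm{Valid}(k)$ to be: for all $u:[k]\to\mathbb{Z}^r$ and all $X:\mathbb{Z}^{[k]}\to V$, if $P^k(u)$ then $F\big(X(\alpha(u)),\mathrm{fold}_k(g_1,u),\dots,\mathrm{fold}_k(g_m,u)\big)=\mathsf{true}$, where $\alpha(u):[k]\to\mathbb{Z}$, $j\mapsto e(u(j))$.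
   Context: $[k]=\{1,\dots,k\}$. For $\gamma:A\to\{\mathsf{true},\mathsf{false}\}$ and $u:[k]\to A$, $\mathrm{fold}_k(\gamma,u)=\bigwedge_{j\in[k]}\gamma(u(j))$. $\Phi_{\wedge,\vee}$ is the set of negation-free formulas built from atoms with $\wedge,\vee$, and $P^k(u)$ is the truth value of $P$ when each atom $a_\gamma$ is interpreted as $\mathrm{fold}_k(\gamma,u)$. Interpretation in the paper: $k$ is the rank of the single aggregated axis of a rewrite rule; $u$ bundles all integer maps on that axis (tensor shape, operator attributes, the output access); $P$ encodes precondition, validity of the LHS expression and validity of the access; $X$ is the input tensor; $F$ is the scalar function (''scalarf'') comparing LHS and RHS values; $\mathrm{Valid}(k)$ says the rule holds at rank $k$. *)

(* Defs.v *)
From mathcomp Require Import all_boot all_order all_algebra.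
Set Implicit Arguments. Unset Strict Implicit. Unset Printing Implicit Defensive.

Definition Zvec (r : nat) := 'I_r -> int.

Definition fold_k (A : Type) (k : nat) (gamma : A -> bool) (u : 'I_k -> A) : bool :=
  \big[andb/true]_(j < k) gamma (u j).

Inductive formula (A : Type) : Type :=
  | FAtom of (A -> bool)
  | FAnd of formula A & formula A
  | FOr of formula A & formula A.

Fixpoint evalP (A : Type) (k : nat) (P : formula A) (u : 'I_k -> A) : bool :=
  match P with
  | FAtom gamma => fold_k gamma u
  | FAnd P1 P2 => evalP P1 u && evalP P2 u
  | FOr P1 P2 => evalP P1 u || evalP P2 u
  end.

Definition Valid (r : nat) (V : Type) (e : Zvec r -> int) (m : nat)
    (g : 'I_m -> Zvec r -> bool) (F : V -> {ffun 'I_m -> bool} -> bool)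
    (P : formula (Zvec r)) (k : nat) : Prop :=
  forall (u : 'I_k -> Zvec r) (X : ('I_k -> int) -> V),
    evalP P u ->
    F (X (fun j => e (u j))) [ffun i => fold_k (g i) u] = true.

(* Main.v *)
Require Import Defs.
From mathcomp Require Import all_boot all_order all_algebra.

Lemma fold_kP (A : Type) (k : nat) (gamma : A -> bool) (u : 'I_k -> A) :
  reflect (forall j, gamma (u j)) (fold_k gamma u).
Proof. rewrite /fold_k big_andE; exact: forallP. Qed.

Lemma evalP_mono (A : Type) (k k' : nat) (P : formula A) (u : 'I_k -> A)
  (u' : 'I_k' -> A) :
  (forall gamma, fold_k gamma u -> fold_k gamma u') ->
  evalP P u -> evalP P u'.
Proof.
move=> H; elim: P => [gamma|P1 IH1 P2 IH2|P1 IH1 P2 IH2] /=.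
- exact: H.
- by case/andP => /IH1 -> /IH2 ->.
- by case/orP => [/IH1 ->|/IH2 ->]; rewrite ?orbT.
Qed.

Theorem mainTheorem3 (r : nat) (V : Type) (e : Zvec r -> int) (m : nat)
    (g : 'I_m -> Zvec r -> bool) (F : V -> {ffun 'I_m -> bool} -> bool)
    (P : formula (Zvec r)) (k : nat) :
  (maxn m 1 <= k)%N ->
  Valid e g F P k -> Valid e g F P k.+1.
Proof.
move=> Hk HV u X HP.
have Hmk : (m <= k)%N by apply: leq_trans Hk; rewrite leq_maxl.
pose c := fun i : 'I_m =>
  if [pick j | ~~ g i (u j)] is Some j then j else (ord0 : 'I_k.+1).
have [j0 Hj0 | Hnone] := pickP (fun j0 : 'I_k.+1 => j0 \notin codom c); last first.
  exfalso.
  have Hsub : ('I_k.+1 : pred 'I_k.+1) \subset (mem (codom c)).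
    by apply/subsetP => x _; move: (Hnone x) => /= /negbFE.
  have := subset_leq_card Hsub.
  rewrite card_ord => H1.
  have := leq_trans H1 (card_size (codom c)).
  rewrite size_codom card_ord => H2.
  by move: (leq_trans H2 Hmk); rewrite ltnn.
pose u' := fun j : 'I_k => u (lift j0 j).
have Hmon : forall gamma, fold_k gamma u -> fold_k gamma u'.
  by move=> gamma /fold_kP Hg; apply/fold_kP => j; apply: Hg.
have := HV u' (fun _ => X (fun j => e (u j))) (@evalP_mono _ _ _ P u u' Hmon HP).
congr (F _ _ = _).
apply/ffunP => i; rewrite !ffunE.
case Hf: (fold_k (g i) u); first exact: Hmon.
apply/negbTE/negP => /fold_kP Hu'.
move/negbT: Hf => /fold_kP Hf; apply: Hf => j.
case Hgj: (g i (u j)) => //.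
have Hpick : exists j1, ~~ g i (u j1) by exists j; rewrite Hgj.
have Hci : ~~ g i (u (c i)).
  rewrite /c; case: pickP => [j1 //|H0].
  by move: (H0 j); rewrite /= Hgj.
have Hne : j0 != c i.
  apply/eqP => E; move: Hj0; rewrite E; by rewrite codom_f.
have [j' Ej' _] := unlift_some Hne.
by move: (Hu' j'); rewrite /u' -Ej' (negbTE Hci).
Qed.
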